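(* Suppose $g\in\mathcal{B}\setminus\mathcal{B}_0$. Then there exist $\delta\in(0,\pi/8)$, an increasing sequence $(r_n)_n$ in $(0,1)$ with $\lim_{n\to\infty}r_n=1$, and a sequence $(t_n)_n$ in $[0,2\pi)$ such that for every $n\in\mathbb{N}$ and every $t\in[-\delta(1-r_n),\delta(1-r_n)]$, $$(1-r_n)\,|g'(r_ne^{i(t_n+t)})|\ge\delta.$$
   Context: The Bloch space $\mathcal{B}$ consists of analytic $f$ on the unit disk $\mathbb{D}$ with $\sup_{z\in\mathbb{D}}(1-|z|^2)|f'(z)|<\infty$, and the little Bloch space $\mathcal{B}_0$ of those with $\lim_{|z|\to1^-}(1-|z|^2)|f'(z)|=0$. *)

(* Defs.v *)
From Stdlib Require Import Reals.
From Coquelicot Require Import Coquelicot.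
Open Scope R_scope.

Definition in_disk (z : C) : Prop := Cmod z < 1.

Definition deriv_on_disk (f f' : C -> C) : Prop :=
  forall z : C, in_disk z -> is_derive (K:=C_AbsRing) (V:=C_NormedModule) f z (f' z).

Definition bloch (f f' : C -> C) : Prop :=
  deriv_on_disk f f' /\
  exists M : R, forall z : C, in_disk z -> (1 - Cmod z ^ 2) * Cmod (f' z) <= M.

Definition little_bloch (f f' : C -> C) : Prop :=
  deriv_on_disk f f' /\
  forall eps : R, 0 < eps -> exists rho : R, rho < 1 /\
    forall z : C, rho < Cmod z -> Cmod z < 1 -> (1 - Cmod z ^ 2) * Cmod (f' z) < eps.

Definition polar (r theta : R) : C := (r * cos theta, r * sin theta).

(* Main.v *)
Require Import Defs.
From Stdlib Require Import Reals Lra Classical ClassicalEpsilon.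
From Coquelicot Require Import Coquelicot.
Open Scope R_scope.

Lemma deriv_eps_raw (f : C -> C) z l :
  is_derive (K:=C_AbsRing) (V:=C_NormedModule) f z l ->
  forall eps, 0 < eps -> exists del, 0 < del /\ forall w, Cmod (w - z) < del ->
   Cmod (f w - f z - (w - z) * l)%C <= eps * Cmod (w - z).
Proof.
  intros [_ H] eps Heps.
  assert (Hz : is_filter_lim (locally z) z) by (intros P HP; exact HP).
  destruct (H z Hz (mkposreal eps Heps)) as [del Hd].
  exists del; split; [apply cond_pos|].
  intros w Hw. apply (Hd w). exact Hw.
Qed.

Lemma deriv_eps (f : C -> C) (z l : C) :
  is_derive (K:=C_AbsRing) (V:=C_NormedModule) f z l ->
  forall eps, 0 < eps -> exists del, 0 < del /\ forall w : C, Cmod (w - z) < del ->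
   Cmod (f w - f z - (w - z) * l)%C <= eps * Cmod (w - z).
Proof. exact (deriv_eps_raw f z l). Qed.

Lemma norm_CR (z : C) : norm (K:=R_AbsRing) (V:=C_R_NormedModule) z = Cmod z.
Proof.
  unfold norm; simpl. unfold prod_norm, Cmod. simpl. unfold abs; simpl.
  change (norm (fst z)) with (Rabs (fst z)); change (norm (snd z)) with (Rabs (snd z)).
  f_equal. rewrite <- !Rmult_assoc, !Rmult_1_r, <- !Rabs_mult, !Rabs_right; try lra; apply Rle_ge, Rle_0_sqr.
Qed.

Definition ei (v : R) : C := (cos v, sin v).
Definition em (v : R) : C := (cos v, - sin v).

Lemma ei_em v : (ei v * em v)%C = 1%C.
Proof.
  unfold ei, em, Cmult; simpl. pose proof (sin2_cos2 v). unfold Rsqr in H.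
  unfold RtoC. f_equal; lra.
Qed.

Lemma ei_neq0 v : ei v <> 0%C.
Proof.
  intro H. pose proof (ei_em v). rewrite H in H0. rewrite Cmult_0_l in H0.
  apply C1_nz. auto.
Qed.

Lemma em_inv v : em v = (/ ei v)%C.
Proof.
  pose proof (ei_em v). pose proof (ei_neq0 v).
  rewrite <- (Cmult_1_l (/ ei v)%C). rewrite <- H. field. auto.
Qed.

Lemma Cmod_ei v : Cmod (ei v) = 1.
Proof.
  unfold Cmod, ei; simpl. pose proof (sin2_cos2 v). unfold Rsqr in H.
  replace (cos v * (cos v * 1) + sin v * (sin v * 1)) with 1 by lra. apply sqrt_1.
Qed.

Lemma Cmod_em v : Cmod (em v) = 1.
Proof.
  unfold Cmod, em; simpl. pose proof (sin2_cos2 v). unfold Rsqr in H.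
  replace (cos v * (cos v * 1) + - sin v * (- sin v * 1)) with 1 by lra. apply sqrt_1.
Qed.

Lemma Cmod_pair_le (a b : R) : Cmod (a, b) <= Rabs a + Rabs b.
Proof.
  unfold Cmod; simpl.
  rewrite <- (sqrt_Rsqr (Rabs a + Rabs b)).
  2: { pose proof (Rabs_pos a); pose proof (Rabs_pos b); lra. }
  apply sqrt_le_1_alt. unfold Rsqr.
  pose proof (Rabs_pos a); pose proof (Rabs_pos b).
  replace (a * (a * 1) + b * (b * 1)) with (Rabs a * Rabs a + Rabs b * Rabs b).
  2:{ rewrite <- !Rabs_mult. rewrite !Rabs_right; try (apply Rle_ge, Rle_0_sqr). ring. }
  nra.
Qed.

Lemma Cmod_fst (z : C) : Rabs (fst z) <= Cmod z.
Proof. pose proof (Rmax_Cmod z). pose proof (Rmax_l (Rabs (fst z)) (Rabs (snd z))). lra. Qed.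
Lemma Cmod_snd (z : C) : Rabs (snd z) <= Cmod z.
Proof. pose proof (Rmax_Cmod z). pose proof (Rmax_r (Rabs (fst z)) (Rabs (snd z))). lra. Qed.

Lemma sin_lip a b : Rabs (sin a - sin b) <= Rabs (a - b).
Proof.
  destruct (MVT_gen sin b a cos) as [c [_ Hc]].
  - intros; apply is_derive_Reals, derivable_pt_lim_sin.
  - intros; apply continuity_sin.
  - rewrite Hc, Rabs_mult.     assert (Rabs (cos c) <= 1) by (apply Rabs_le; pose proof (COS_bound c); lra).
    pose proof (Rabs_pos (a - b)). nra.
Qed.

Lemma cos_lip a b : Rabs (cos a - cos b) <= Rabs (a - b).
Proof.
  destruct (MVT_gen cos b a (fun t => - sin t)) as [c [_ Hc]].
  - intros; apply is_derive_Reals, derivable_pt_lim_cos.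
  - intros; apply continuity_cos.
  - rewrite Hc, Rabs_mult. 
    assert (Rabs (- sin c) <= 1) by (rewrite Rabs_Ropp; apply Rabs_le; pose proof (SIN_bound c); lra).
    pose proof (Rabs_pos (a - b)). nra.
Qed.

Lemma ei_lip v w : Cmod (ei v - ei w) <= 2 * Rabs (v - w).
Proof.
  unfold ei, Cminus, Cplus, Copp; simpl.
  eapply Rle_trans; [apply Cmod_pair_le|].
  pose proof (sin_lip v w); pose proof (cos_lip v w).
  unfold Rminus in *. lra.
Qed.

Lemma dot_le (a b : C) : Rabs (fst a * fst b + snd a * snd b) <= Cmod a * Cmod b.
Proof.
  unfold Cmod. rewrite <- sqrt_mult; try (apply Rplus_le_le_0_compat; apply pow2_ge_0).
  rewrite <- sqrt_Rsqr_abs. apply sqrt_le_1_alt. unfold Rsqr.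
  destruct a as [a1 a2], b as [b1 b2]; simpl.
  rewrite !Rmult_1_r. pose proof (Rle_0_sqr (a1*b2 - a2*b1)). unfold Rsqr in *. nra.
Qed.

Definition ccont (f : R -> C) (t0 : R) : Prop :=
  forall eps, 0 < eps -> exists del, 0 < del /\ forall t, Rabs (t - t0) < del ->
    Cmod (f t - f t0) < eps.

Lemma ccont_continuous f t0 : ccont f t0 ->
  continuous (U := C_R_NormedModule) f t0.
Proof.
  intros H. apply filterlim_locally. intros eps.
  destruct (H eps (cond_pos eps)) as [del [Hd Hf]].
  exists (mkposreal del Hd). intros t Ht.
  apply (norm_compat1 (V:=C_R_NormedModule)). rewrite norm_CR.
  apply Hf. exact Ht.
Qed.

Lemma ccont_const K t0 : ccont (fun _ => K) t0.
Proof. intros eps He; exists 1; split; [lra|]. intros. unfold Cminus. rewrite Cplus_opp_r, Cmod_0. auto. Qed.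

Lemma ex_derive_cpt (f : R -> R) t0 : ex_derive f t0 -> continuity_pt f t0.
Proof. intros H. apply continuity_pt_filterlim. apply (ex_derive_continuous f t0 H). Qed.

Lemma ccont_pair (f1 f2 : R -> R) t0 : continuity_pt f1 t0 -> continuity_pt f2 t0 ->
  ccont (fun t => (f1 t, f2 t)) t0.
Proof.
  intros H1 H2 eps He.
  destruct (H1 (eps/2)) as [d1 [Hd1 Hf1]]; [lra|].
  destruct (H2 (eps/2)) as [d2 [Hd2 Hf2]]; [lra|].
  exists (Rmin d1 d2); split; [apply Rmin_pos; auto|].
  intros t Ht. unfold Cminus, Cplus, Copp; simpl.
  eapply Rle_lt_trans; [apply Cmod_pair_le|].
  destruct (Req_dec t t0) as [->|Hne].
  { rewrite !Rplus_opp_r, Rabs_R0. lra. }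
  assert (A1 : Rabs (f1 t - f1 t0) < eps/2).
  { apply (Hf1 t). split. split. exact I. auto. simpl. unfold R_dist. pose proof (Rmin_l d1 d2). lra. }
  assert (A2 : Rabs (f2 t - f2 t0) < eps/2).
  { apply (Hf2 t). split. split. exact I. auto. simpl. unfold R_dist. pose proof (Rmin_r d1 d2). lra. }
  unfold Rminus in *. lra.
Qed.

Lemma ccont_RtoC (f : R -> R) t0 : continuity_pt f t0 -> ccont (fun t => RtoC (f t)) t0.
Proof.
  intros H. apply (ccont_pair f (fun _ => 0)); auto. apply continuity_pt_const. intros x y; auto.
Qed.

Lemma ccont_add f h t0 : ccont f t0 -> ccont h t0 -> ccont (fun t => f t + h t)%C t0.
Proof.
  intros H1 H2 eps He.
  destruct (H1 (eps/2)) as [d1 [Hd1 Hf1]]; [lra|].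
  destruct (H2 (eps/2)) as [d2 [Hd2 Hf2]]; [lra|].
  exists (Rmin d1 d2); split; [apply Rmin_pos; auto|].
  intros t Ht.
  replace (f t + h t - (f t0 + h t0))%C with ((f t - f t0) + (h t - h t0))%C by ring.
  eapply Rle_lt_trans; [apply Cmod_triangle|].
  pose proof (Hf1 t (Rlt_le_trans _ _ _ Ht (Rmin_l _ _))).
  pose proof (Hf2 t (Rlt_le_trans _ _ _ Ht (Rmin_r _ _))). lra.
Qed.

Lemma ccont_mul f h t0 : ccont f t0 -> ccont h t0 -> ccont (fun t => f t * h t)%C t0.
Proof.
  intros H1 H2 eps He.
  set (A := Cmod (f t0)). set (B := Cmod (h t0)).
  assert (HA : 0 <= A) by apply Cmod_ge_0. assert (HB : 0 <= B) by apply Cmod_ge_0.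
  set (e1 := Rmin 1 (eps / (2 * (B + 1)))).
  set (e2 := eps / (2 * (A + 1))).
  assert (He1 : 0 < e1). { apply Rmin_pos; [lra|]. apply Rdiv_lt_0_compat; lra. }
  assert (He2 : 0 < e2). { apply Rdiv_lt_0_compat; lra. }
  destruct (H1 e1 He1) as [d1 [Hd1 Hf1]].
  destruct (H2 e2 He2) as [d2 [Hd2 Hf2]].
  exists (Rmin d1 d2); split; [apply Rmin_pos; auto|].
  intros t Ht.
  pose proof (Hf1 t (Rlt_le_trans _ _ _ Ht (Rmin_l _ _))) as F1.
  pose proof (Hf2 t (Rlt_le_trans _ _ _ Ht (Rmin_r _ _))) as F2.
  replace (f t * h t - f t0 * h t0)%C with ((f t - f t0) * h t + f t0 * (h t - h t0))%C by ring.
  eapply Rle_lt_trans; [apply Cmod_triangle|]. rewrite !Cmod_mult.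
  assert (Cmod (h t) <= B + e2).
  { replace (h t) with (h t0 + (h t - h t0))%C by ring.
    eapply Rle_trans; [apply Cmod_triangle|]. fold B. lra. }
  assert (e1 <= 1) by apply Rmin_l.
  assert (e1 <= eps / (2 * (B + 1))) by apply Rmin_r.
  assert (e2 * (A+1) = eps/2) by (unfold e2; field; lra).
  assert (e1 * (B+1) <= eps/2).
  { apply Rle_trans with (eps / (2 * (B + 1)) * (B+1)). apply Rmult_le_compat_r; lra.
    right; field; lra. }
  pose proof (Cmod_ge_0 (f t - f t0)). pose proof (Cmod_ge_0 (h t - h t0)).
  pose proof (Cmod_ge_0 (h t)).
  apply Rle_lt_trans with (e1 * (B + e2) + A * e2).
  { apply Rplus_le_compat. apply Rmult_le_compat; lra. apply Rmult_le_compat_l; lra. }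
  (* e1*(B+e2) + A e2 <= e1 B + e2 + A e2 = e1 B + e2 (A+1) *)
  assert (e1 * e2 <= e2) by nra.
  assert (e1 * B < eps / 2) by nra.
  nra.
Qed.

Lemma ccont_comp (l : C) (gf : C -> C) f t0 :
  is_derive (K:=C_AbsRing) (V:=C_NormedModule) gf (f t0) l -> ccont f t0 ->
  ccont (fun t => gf (f t)) t0.
Proof.
  intros Hd Hc eps He.
  destruct (deriv_eps gf (f t0) l Hd 1 Rlt_0_1) as [d1 [Hd1 Hg]].
  set (e := Rmin d1 (eps / (Cmod l + 2))).
  assert (HL : 0 <= Cmod l) by apply Cmod_ge_0.
  assert (Hep : 0 < e) by (apply Rmin_pos; auto; apply Rdiv_lt_0_compat; lra).
  destruct (Hc e Hep) as [d [Hd0 Hf]].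
  exists d; split; auto. intros t Ht. pose proof (Hf t Ht) as F.
  assert (F1 : Cmod (f t - f t0) < d1) by (eapply Rlt_le_trans; [exact F| apply Rmin_l]).
  pose proof (Hg _ F1) as G.
  replace (gf (f t) - gf (f t0))%C with ((gf (f t) - gf (f t0) - (f t - f t0) * l) + (f t - f t0) * l)%C by ring.
  eapply Rle_lt_trans; [apply Cmod_triangle|]. rewrite Cmod_mult.
  assert (Cmod (f t - f t0) < eps / (Cmod l + 2)) by (eapply Rlt_le_trans; [exact F| apply Rmin_r]).
  assert (eps / (Cmod l + 2) * (Cmod l + 2) = eps) by (field; lra).
  pose proof (Cmod_ge_0 (f t - f t0)).
  nra.
Qed.

Notation CR := C_R_NormedModule.
Definition RI (f : R -> C) a b : C := RInt (V := C_R_CompleteNormedModule) f a b.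

Lemma is_RInt_pairR (f1 f2 : R -> R) a b l1 l2 :
  is_RInt f1 a b l1 -> is_RInt f2 a b l2 ->
  is_RInt (V:=CR) (fun t => (f1 t, f2 t)) a b (l1, l2).
Proof.
  intros H1 H2.
  exact (is_RInt_fct_extend_pair (U:=R_NormedModule) (V:=R_NormedModule)
     (fun t => (f1 t, f2 t)) a b l1 l2 H1 H2).
Qed.

Lemma is_RInt_fstC (f : R -> C) a b l : is_RInt (V:=CR) f a b l ->
  is_RInt (fun t => fst (f t)) a b (fst l).
Proof.
  intros H. exact (is_RInt_fct_extend_fst (U:=R_NormedModule) (V:=R_NormedModule) f a b l H).
Qed.

Lemma is_RInt_sndC (f : R -> C) a b l : is_RInt (V:=CR) f a b l ->
  is_RInt (fun t => snd (f t)) a b (snd l).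
Proof.
  intros H. exact (is_RInt_fct_extend_snd (U:=R_NormedModule) (V:=R_NormedModule) f a b l H).
Qed.

Lemma is_RInt_lin2 (f1 f2 : R -> R) a b l1 l2 al be :
  is_RInt f1 a b l1 -> is_RInt f2 a b l2 ->
  is_RInt (fun t => al * f1 t + be * f2 t) a b (al * l1 + be * l2).
Proof.
  intros H1 H2.
  exact (is_RInt_plus _ _ a b _ _ (is_RInt_scal _ a b al _ H1) (is_RInt_scal _ a b be _ H2)).
Qed.

Lemma is_RInt_Cmul (K : C) (f : R -> C) a b l :
  is_RInt (V:=CR) f a b l -> is_RInt (V:=CR) (fun t => K * f t)%C a b (K * l)%C.
Proof.
  intros H. destruct K as [k1 k2]. destruct l as [l1 l2].
  pose proof (is_RInt_fstC _ _ _ _ H) as H1. pose proof (is_RInt_sndC _ _ _ _ H) as H2.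
  simpl in H1, H2.
  apply is_RInt_ext with (fun t => (k1 * fst (f t) + (- k2) * snd (f t), k1 * snd (f t) + k2 * fst (f t))).
  { intros t _. unfold Cmult. simpl. f_equal; ring. }
  replace ((k1, k2) * (l1, l2))%C with (k1 * l1 + (- k2) * l2, k1 * l2 + k2 * l1).
  2:{ unfold Cmult; simpl. f_equal; ring. }
  apply is_RInt_pairR; apply is_RInt_lin2; auto.
Qed.

Lemma scal_CR (r : R) (z : C) : scal (V:=CR) r z = (RtoC r * z)%C.
Proof. destruct z. change (scal (V:=CR) r (r0, r1)) with (r * r0, r * r1). unfold RtoC, Cmult; simpl. f_equal; ring. Qed.

Lemma is_RInt_RtoC (K : C) (f : R -> R) a b l :
  is_RInt f a b l -> is_RInt (V:=CR) (fun t => K * RtoC (f t))%C a b (K * RtoC l)%C.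
Proof.
  intros H. apply is_RInt_Cmul. unfold RtoC. apply is_RInt_pairR; auto.
  pose proof (is_RInt_const (V:=R_NormedModule) a b 0) as Hc.
  replace (scal (b - a) (0:R_NormedModule)) with 0 in Hc. exact Hc.
  change (0 = (b - a) * 0). ring.
Qed.

Lemma is_RInt_Cconst (K : C) a b : is_RInt (V:=CR) (fun _ => K) a b (RtoC (b - a) * K)%C.
Proof. rewrite <- scal_CR. apply is_RInt_const. Qed.

Lemma is_RInt_inv2 a b : 0 < a -> 0 < b -> is_RInt (fun u => / (u * u)) a b (/ a - / b).
Proof.
  intros Ha Hb.
  replace (/ a - / b) with (minus ((fun u => - / u) b) ((fun u => - / u) a)).
  2:{ unfold minus, plus, opp; simpl. ring. }
  apply (is_RInt_derive (V:=R_CompleteNormedModule) (fun u => - / u) (fun u => /(u*u))).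
  - intros x Hx. assert (0 < x) by (pose proof (Rmin_glb_lt a b 0); destruct Hx; 
      apply Rlt_le_trans with (Rmin a b); auto; apply Rmin_glb_lt; auto).
    auto_derive. lra. field. lra.
  - intros x Hx. assert (0 < x) by (destruct Hx; 
      apply Rlt_le_trans with (Rmin a b); auto; apply Rmin_glb_lt; auto).
    apply continuity_pt_filterlim. apply ex_derive_cpt. auto_derive. nra.
Qed.

Lemma is_RInt_em c d : is_RInt (V:=CR) em c d (sin d - sin c, cos d - cos c).
Proof.
  unfold em. apply is_RInt_pairR.
  - replace (sin d - sin c) with (minus (sin d) (sin c)) by reflexivity.
    apply (is_RInt_derive (V:=R_CompleteNormedModule) sin cos).
    + intros; apply is_derive_Reals, derivable_pt_lim_sin.
    + intros; apply continuity_pt_filterlim, continuity_cos.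
  - replace (cos d - cos c) with (minus (cos d) (cos c)) by reflexivity.
    apply (is_RInt_derive (V:=R_CompleteNormedModule) cos (fun v => - sin v)).
    + intros; apply is_derive_Reals, derivable_pt_lim_cos.
    + intros; apply continuity_pt_filterlim. apply continuity_pt_opp, continuity_sin.
Qed.

Lemma RInt_bound (f : R -> C) a b l M : a <= b -> is_RInt (V:=CR) f a b l ->
  (forall t, a <= t <= b -> Cmod (f t) <= M) -> Cmod l <= M * (b - a).
Proof.
  intros Hab Hf HM.
  rewrite <- norm_CR.
  apply (norm_RInt_le f (fun _ => M) a b l (M * (b - a))); auto.
  - intros t Ht. rewrite norm_CR. auto.
  - replace (M * (b - a)) with (scal (b - a) M) by (unfold scal; simpl; unfold mult; simpl; ring).
    apply (is_RInt_const (V:=R_NormedModule)).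
Qed.

Lemma ex_RInt_cc (f : R -> C) a b :
  (forall t, Rmin a b <= t <= Rmax a b -> ccont f t) -> ex_RInt (V:=C_R_CompleteNormedModule) f a b.
Proof.
  intros H. apply ex_RInt_continuous. intros z Hz. apply ccont_continuous. auto.
Qed.

Lemma RI_correct (f : R -> C) a b : ex_RInt (V:=C_R_CompleteNormedModule) f a b ->
  is_RInt (V:=CR) f a b (RI f a b).
Proof. intros H. apply (RInt_correct (V:=C_R_CompleteNormedModule)). auto. Qed.

Lemma RI_Chasles (f : R -> C) a b c : ex_RInt (V:=C_R_CompleteNormedModule) f a b ->
  ex_RInt (V:=C_R_CompleteNormedModule) f b c ->
  (RI f a b + RI f b c)%C = RI f a c.
Proof. intros H1 H2. apply (RInt_Chasles (V:=C_R_CompleteNormedModule)); auto. Qed.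

Lemma is_RI (f : R -> C) a b l : is_RInt (V:=CR) f a b l -> RI f a b = l.
Proof. intros H. apply (is_RInt_unique (V:=C_R_CompleteNormedModule)). exact H. Qed.

Lemma is_RInt_Cminus (f h : R -> C) a b l1 l2 : is_RInt (V:=CR) f a b l1 ->
  is_RInt (V:=CR) h a b l2 -> is_RInt (V:=CR) (fun t => f t - h t)%C a b (l1 - l2)%C.
Proof. intros H1 H2. exact (is_RInt_minus _ _ a b _ _ H1 H2). Qed.

Lemma is_RInt_Cplus (f h : R -> C) a b l1 l2 : is_RInt (V:=CR) f a b l1 ->
  is_RInt (V:=CR) h a b l2 -> is_RInt (V:=CR) (fun t => f t + h t)%C a b (l1 + l2)%C.
Proof. intros H1 H2. exact (is_RInt_plus _ _ a b _ _ H1 H2). Qed.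

Definition gam (x : C) (u v : R) : C := (x + RtoC u * ei v)%C.
Definition PP (g : C -> C) x u v : C := (g (gam x u v) * em v * RtoC (/ (u*u)))%C.
Definition QQ (g : C -> C) x u v : C := (Ci * g (gam x u v) * em v * RtoC (/ u))%C.
Definition JJ g x a b c d : C :=
  (RI (fun u => PP g x u c) a b - RI (fun u => PP g x u d) a b
   + (RI (fun v => QQ g x b v) c d - RI (fun v => QQ g x a v) c d))%C.

Definition HDer (g g' : C -> C) (x : C) (rho : R) : Prop :=
  forall w, Cmod (w - x) <= rho -> is_derive (K:=C_AbsRing) (V:=C_NormedModule) g w (g' w).

Lemma Cmod_gam x u v : 0 <= u -> Cmod (gam x u v - x) = u.
Proof.
  intros Hu. unfold gam. replace (x + RtoC u * ei v - x)%C with (RtoC u * ei v)%C by ring.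
  rewrite Cmod_mult, Cmod_ei, Cmod_R, Rabs_right; lra.
Qed.

Lemma ccont_gam_u x v u0 : ccont (fun u => gam x u v) u0.
Proof.
  unfold gam. apply ccont_add. apply ccont_const. apply ccont_mul.
  apply ccont_RtoC. apply continuity_pt_id. apply ccont_const.
Qed.

Lemma ccont_ei v0 : ccont ei v0.
Proof. unfold ei. apply ccont_pair; [apply continuity_cos | apply continuity_sin]. Qed.

Lemma ccont_em v0 : ccont em v0.
Proof. unfold em. apply ccont_pair; [apply continuity_cos | apply continuity_pt_opp, continuity_sin]. Qed.

Lemma ccont_gam_v x u v0 : ccont (fun v => gam x u v) v0.
Proof.
  unfold gam. apply ccont_add. apply ccont_const. apply ccont_mul.
  apply ccont_const. apply ccont_ei.
Qed.

Lemma exP g g' x rho a0 : 0 < a0 -> HDer g g' x rho ->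
  forall c a b, a0 <= a -> a <= b -> b <= rho ->
  ex_RInt (V:=C_R_CompleteNormedModule) (fun u => PP g x u c) a b.
Proof.
  intros Ha0 HD c a b Ha Hab Hb. apply ex_RInt_cc.
  rewrite Rmin_left, Rmax_right by lra. intros t Ht.
  unfold PP. apply ccont_mul; [apply ccont_mul|].
  - apply (ccont_comp (g' (gam x t c))). apply HD. rewrite Cmod_gam; lra.
    apply ccont_gam_u.
  - apply ccont_const.
  - apply ccont_RtoC. apply ex_derive_cpt. auto_derive. nra.
Qed.

Lemma exQ g g' x rho : HDer g g' x rho ->
  forall u c d, 0 < u -> u <= rho ->
  ex_RInt (V:=C_R_CompleteNormedModule) (fun v => QQ g x u v) c d.
Proof.
  intros HD u c d Hu Hu2. apply ex_RInt_cc. intros t Ht.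
  unfold QQ. apply ccont_mul; [apply ccont_mul; [apply ccont_mul|]|].
  - apply ccont_const.
  - apply (ccont_comp (g' (gam x u t))). apply HD. rewrite Cmod_gam; lra.
    apply ccont_gam_v.
  - apply ccont_em.
  - apply ccont_const.
Qed.

Lemma JJ_quarter g g' x rho a0 : 0 < a0 -> HDer g g' x rho ->
  forall a b c d, a0 <= a -> a <= b -> b <= rho ->
  let m := (a + b) / 2 in let k := (c + d) / 2 in
  JJ g x a b c d = (JJ g x a m c k + JJ g x m b c k + JJ g x a m k d + JJ g x m b k d)%C.
Proof.
  intros Ha0 HD a b c d Ha Hab Hb m k.
  assert (Hm1 : a <= m) by (unfold m; lra). assert (Hm2 : m <= b) by (unfold m; lra).
  unfold JJ.
  rewrite <- (RI_Chasles (fun u => PP g x u c) a m b) by (eapply exP; eauto; lra).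
  rewrite <- (RI_Chasles (fun u => PP g x u d) a m b) by (eapply exP; eauto; lra).
  rewrite <- (RI_Chasles (fun v => QQ g x a v) c k d) by (eapply exQ; eauto; lra).
  rewrite <- (RI_Chasles (fun v => QQ g x b v) c k d) by (eapply exQ; eauto; lra).
  ring.
Qed.

Lemma gam_diff x u v u0 v0 : 0 <= u0 ->
  Cmod (gam x u v - gam x u0 v0) <= Rabs (u - u0) + 2 * u0 * Rabs (v - v0).
Proof.
  intros Hu0.
  replace (gam x u v - gam x u0 v0)%C with (RtoC (u - u0) * ei v + RtoC u0 * (ei v - ei v0))%C
    by (unfold gam; rewrite RtoC_minus; ring).
  eapply Rle_trans; [apply Cmod_triangle|]. rewrite !Cmod_mult, Cmod_ei, !Cmod_R.
  rewrite (Rabs_right u0) by lra. pose proof (ei_lip v v0). nra.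
Qed.

Definition EE c d : C := (sin d - sin c, cos d - cos c).

Lemma Ci_E c d : (Ci * (EE c d))%C = (em c - em d)%C.
Proof. unfold EE, Ci, em, Cmult, Cminus, Cplus, Copp; simpl. f_equal; ring. Qed.

Lemma RtoC_neq0 (b : R) : b <> 0 -> RtoC b <> 0%C.
Proof. intros H E. apply H. injection E. auto. Qed.

Lemma local_est g g' x rho a0 : 0 < a0 -> HDer g g' x rho ->
  forall u0 v0, a0 <= u0 <= rho -> forall eps, 0 < eps -> exists del, 0 < del /\
  forall a b c d, a0 <= a -> a <= u0 -> u0 <= b -> b <= rho -> c <= v0 -> v0 <= d ->
  (b - a) + (d - c) < del ->
  Cmod (JJ g x a b c d) <= eps * (2 * (1 + 2 * rho) * (/ (a0 * a0) + / a0)) * ((b - a) + (d - c)) ^ 2.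
Proof.
  intros Ha0 HD u0 v0 Hu0 eps Heps.
  set (w0 := gam x u0 v0). set (l := g' w0).
  assert (Hd : is_derive (K:=C_AbsRing) (V:=C_NormedModule) g w0 l).
  { apply HD. unfold w0. rewrite Cmod_gam; lra. }
  destruct (deriv_eps _ _ _ Hd eps Heps) as [d1 [Hd1 Hr]].
  set (L := 1 + 2 * rho).
  assert (HL : 0 < L) by (unfold L; lra).
  exists (d1 / L). split; [apply Rdiv_lt_0_compat; lra|].
  intros a b c d Ha Hau Hub Hb Hvc Hvd Hs.
  set (s := (b - a) + (d - c)) in *.
  set (al := (g w0 - w0 * l)%C). set (A := (al + l * x)%C).
  set (r := fun w => (g w - al - l * w)%C).
  assert (HR : forall u v, a <= u <= b -> c <= v <= d -> Cmod (r (gam x u v)) <= eps * (L * s)).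
  { intros u v Hu Hv.
    assert (G : Cmod (gam x u v - w0) <= L * s).
    { unfold w0. eapply Rle_trans; [apply gam_diff; lra|].
      assert (Rabs (u - u0) <= s) by (unfold s; apply Rabs_le; lra).
      assert (Rabs (v - v0) <= s) by (unfold s; apply Rabs_le; lra).
      unfold L. pose proof (Rabs_pos (v - v0)). nra. }
    assert (G2 : Cmod (gam x u v - w0) < d1).
    { eapply Rle_lt_trans; [exact G|]. 
      apply Rlt_le_trans with (L * (d1 / L)). apply Rmult_lt_compat_l; auto.
      right; field; lra. }
    pose proof (Hr _ G2) as H.
    replace (r (gam x u v)) with (g (gam x u v) - g w0 - (gam x u v - w0) * l)%C
      by (unfold r, al; ring).
    eapply Rle_trans; [exact H|]. apply Rmult_le_compat_l; lra. }
  assert (Hab : a <= b) by lra. assert (Hcd : c <= d) by lra.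
  assert (Ha' : 0 < a) by lra.
  pose proof (RI_correct _ _ _ (exP g g' x rho a0 Ha0 HD c a b Ha Hab Hb)) as IPc.
  pose proof (RI_correct _ _ _ (exP g g' x rho a0 Ha0 HD d a b Ha Hab Hb)) as IPd.
  set (K1 := (A * (em c - em d))%C).
  pose proof (is_RInt_Cminus _ _ _ _ _ _ (is_RInt_Cminus _ _ _ _ _ _ IPc IPd)
      (is_RInt_RtoC K1 _ a b _ (is_RInt_inv2 a b Ha' (ltac:(lra))))) as HP.
  assert (BP : Cmod ((RI (fun u => PP g x u c) a b - RI (fun u => PP g x u d) a b
      - K1 * RtoC (/ a - / b))%C) <= (2 * (eps * (L * s)) * / (a0 * a0)) * (b - a)).
  { apply (RInt_bound _ a b _ _ Hab HP). intros t Ht.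
    assert (Ht0 : 0 < t) by lra.
    replace (PP g x t c - PP g x t d - K1 * RtoC (/ (t * t)))%C with
      ((r (gam x t c) * em c - r (gam x t d) * em d) * RtoC (/ (t * t)))%C.
    2:{ unfold PP, K1, A, r, gam. rewrite !em_inv. field. split; apply ei_neq0. }
    rewrite Cmod_mult, Cmod_R, Rabs_right.
    2:{ apply Rle_ge, Rlt_le, Rinv_0_lt_compat; nra. }
    apply Rmult_le_compat.
    - apply Cmod_ge_0.
    - apply Rlt_le, Rinv_0_lt_compat; nra.
    - unfold Cminus. eapply Rle_trans; [apply Cmod_triangle|].
      rewrite Cmod_opp, !Cmod_mult, !Cmod_em.
      pose proof (HR t c Ht (ltac:(lra))). pose proof (HR t d Ht (ltac:(lra))). lra.
    - apply Rinv_le_contravar; nra. }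
  pose proof (RI_correct _ _ _ (exQ g g' x rho HD b c d (ltac:(lra)) Hb)) as IQb.
  pose proof (RI_correct _ _ _ (exQ g g' x rho HD a c d Ha' (ltac:(lra)))) as IQa.
  set (K2 := (Ci * A * (/ RtoC b - / RtoC a))%C).
  pose proof (is_RInt_Cminus _ _ _ _ _ _ (is_RInt_Cminus _ _ _ _ _ _ IQb IQa)
      (is_RInt_Cmul K2 _ c d _ (is_RInt_em c d))) as HQ.
  assert (BQ : Cmod ((RI (fun v => QQ g x b v) c d - RI (fun v => QQ g x a v) c d
      - K2 * (EE c d))%C) <= (2 * (eps * (L * s)) * / a0) * (d - c)).
  { apply (RInt_bound _ c d _ _ Hcd HQ). intros t Ht.
    replace (QQ g x b t - QQ g x a t - K2 * em t)%C with
      (Ci * (r (gam x b t) * RtoC (/ b) - r (gam x a t) * RtoC (/ a)) * em t)%C.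
    2:{ unfold QQ, K2, A, r, gam. rewrite !em_inv, !RtoC_inv by lra. field.
        split; [apply ei_neq0|]. split; apply RtoC_neq0; lra. }
    rewrite !Cmod_mult, Cmod_Ci, Cmod_em.
    unfold Cminus. rewrite Rmult_1_l, Rmult_1_r.
    eapply Rle_trans; [apply Cmod_triangle|].
    rewrite Cmod_opp, !Cmod_mult, !Cmod_R, !Rabs_right.
    2,3: apply Rle_ge, Rlt_le, Rinv_0_lt_compat; lra.
    pose proof (HR b t (ltac:(lra)) Ht). pose proof (HR a t (ltac:(lra)) Ht).
    assert (/ b <= / a0) by (apply Rinv_le_contravar; lra).
    assert (/ a <= / a0) by (apply Rinv_le_contravar; lra).
    pose proof (Cmod_ge_0 (r (gam x b t))). pose proof (Cmod_ge_0 (r (gam x a t))).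
    assert (0 <= eps * (L * s)) by (apply Rmult_le_pos; [lra| apply Rmult_le_pos; unfold s; lra]).
    apply Rle_trans with (eps * (L * s) * / a0 + eps * (L * s) * / a0); [|lra].
    apply Rplus_le_compat; apply Rmult_le_compat; try lra; apply Rlt_le, Rinv_0_lt_compat; lra. }
  assert (Z : (K1 * RtoC (/ a - / b) + K2 * (EE c d))%C = 0%C).
  { replace (K2 * (EE c d))%C with
      (A * (/ RtoC b - / RtoC a) * (Ci * (EE c d)))%C by (unfold K2; ring).
    rewrite Ci_E. unfold K1. rewrite RtoC_minus, <- !RtoC_inv by lra. field.
    }
  replace (JJ g x a b c d) with
    ((RI (fun u => PP g x u c) a b - RI (fun u => PP g x u d) a b - K1 * RtoC (/ a - / b))
     + (RI (fun v => QQ g x b v) c d - RI (fun v => QQ g x a v) c d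
      - K2 * (EE c d))
     + (K1 * RtoC (/ a - / b) + K2 * (EE c d)))%C
   by (unfold JJ; ring).
  rewrite Z, Cplus_0_r.
  eapply Rle_trans; [apply Cmod_triangle|].
  assert (X1 : 0 < / (a0 * a0)) by (apply Rinv_0_lt_compat; nra).
  assert (X2 : 0 < / a0) by (apply Rinv_0_lt_compat; nra).
  assert (Hs0 : 0 <= s) by (unfold s; lra).
  assert (E0 : 0 <= eps * (L * s)) by (apply Rmult_le_pos; [lra| apply Rmult_le_pos; lra]).
  assert (b - a <= s) by (unfold s; lra). assert (d - c <= s) by (unfold s; lra).
  apply Rle_trans with (2 * (eps * (L * s)) * / (a0 * a0) * s + 2 * (eps * (L * s)) * / a0 * s).
  { apply Rplus_le_compat.
    - eapply Rle_trans; [exact BP|]. apply Rmult_le_compat_l; [|lra]. 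
      apply Rmult_le_pos; lra.
    - eapply Rle_trans; [exact BQ|]. apply Rmult_le_compat_l; [|lra]. 
      apply Rmult_le_pos; lra. }
  right. fold L. ring.
Qed.

Record rect := mkR { ra : R; rb : R; rc : R; rd : R }.

Lemma bisect (F : R -> R -> R -> R -> R) (Vd : R -> R -> R -> R -> Prop) (k : R) a b c d :
  Vd a b c d -> a < b -> c < d ->
  (forall a b c d, Vd a b c d -> a < b -> c < d ->
     Vd a ((a+b)/2) c ((c+d)/2) /\ Vd ((a+b)/2) b c ((c+d)/2) /\
     Vd a ((a+b)/2) ((c+d)/2) d /\ Vd ((a+b)/2) b ((c+d)/2) d /\
     F a b c d <= F a ((a+b)/2) c ((c+d)/2) + F ((a+b)/2) b c ((c+d)/2)
                  + F a ((a+b)/2) ((c+d)/2) d + F ((a+b)/2) b ((c+d)/2) d) ->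
  (forall u0 v0, a <= u0 <= b -> c <= v0 <= d -> exists del, 0 < del /\
     forall a' b' c' d', Vd a' b' c' d' -> a' <= u0 <= b' -> c' <= v0 <= d' ->
       (b' - a') + (d' - c') < del ->
       F a' b' c' d' <= k * ((b' - a') + (d' - c')) ^ 2) ->
  F a b c d <= k * ((b - a) + (d - c)) ^ 2.
Proof.
  intros HV0 Hab0 Hcd0 Hq Hloc.
  apply Rnot_lt_le; intro Hbad0.
  set (sz := fun R => (rb R - ra R) + (rd R - rc R)).
  set (bad := fun R => Vd (ra R) (rb R) (rc R) (rd R) /\ ra R < rb R /\ rc R < rd R /\
                       k * (sz R) ^ 2 < F (ra R) (rb R) (rc R) (rd R)).
  set (qtr := fun R' R => (ra R' = ra R \/ ra R' = (ra R + rb R) / 2) /\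
                          rb R' = ra R' + (rb R - ra R) / 2 /\
                          (rc R' = rc R \/ rc R' = (rc R + rd R) / 2) /\
                          rd R' = rc R' + (rd R - rc R) / 2).
  assert (step : forall R, bad R -> exists R', bad R' /\ qtr R' R).
  { intros [a1 b1 c1 d1] [HV [Hab [Hcd HF]]]. unfold sz in HF; simpl in *.
    destruct (Hq a1 b1 c1 d1 HV Hab Hcd) as [V1 [V2 [V3 [V4 Hsum]]]].
    set (m := (a1 + b1) / 2) in *. set (n := (c1 + d1) / 2) in *.
    assert (nb : forall R, ~ bad R -> Vd (ra R) (rb R) (rc R) (rd R) -> ra R < rb R -> rc R < rd R ->
               F (ra R) (rb R) (rc R) (rd R) <= k * (sz R) ^ 2).
    { intros R HnB HV' H1 H2. apply Rnot_lt_le. intro H3. apply HnB. repeat split; auto. }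
    destruct (classic (bad (mkR a1 m c1 n))) as [B1|B1].
    { exists (mkR a1 m c1 n). split; auto. unfold qtr; simpl. unfold m, n. repeat split; try lra; left; auto. }
    destruct (classic (bad (mkR m b1 c1 n))) as [B2|B2].
    { exists (mkR m b1 c1 n). split; auto. unfold qtr; simpl. unfold m, n. repeat split; try lra; auto. }
    destruct (classic (bad (mkR a1 m n d1))) as [B3|B3].
    { exists (mkR a1 m n d1). split; auto. unfold qtr; simpl. unfold m, n. repeat split; try lra; auto. }
    destruct (classic (bad (mkR m b1 n d1))) as [B4|B4].
    { exists (mkR m b1 n d1). split; auto. unfold qtr; simpl. unfold m, n. repeat split; try lra; auto. }
    exfalso.
    pose proof (nb _ B1 V1) as F1. pose proof (nb _ B2 V2) as F2.
    pose proof (nb _ B3 V3) as F3. pose proof (nb _ B4 V4) as F4.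
    unfold sz in F1, F2, F3, F4; simpl in F1, F2, F3, F4.
    unfold m, n in *.
    specialize (F1 ltac:(lra) ltac:(lra)). specialize (F2 ltac:(lra) ltac:(lra)).
    specialize (F3 ltac:(lra) ltac:(lra)). specialize (F4 ltac:(lra) ltac:(lra)).
    assert (E : k * ((b1 - a1) + (d1 - c1)) ^ 2 =
      k * (((a1 + b1) / 2 - a1) + ((c1 + d1) / 2 - c1)) ^ 2
    + k * ((b1 - (a1 + b1) / 2) + ((c1 + d1) / 2 - c1)) ^ 2
    + k * (((a1 + b1) / 2 - a1) + (d1 - (c1 + d1) / 2)) ^ 2
    + k * ((b1 - (a1 + b1) / 2) + (d1 - (c1 + d1) / 2)) ^ 2) by field.
    lra. }
  set (R0 := mkR a b c d).
  set (stepR := fun R => epsilon (inhabits R0) (fun R' => bad R' /\ qtr R' R)).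
  set (sq := fun n => Nat.iter n stepR R0).
  assert (Hb : forall n, bad (sq n)).
  { induction n.
    - unfold sq, bad, sz; simpl. repeat split; auto.
    - change (sq (S n)) with (stepR (sq n)). unfold stepR.
      apply (epsilon_spec (inhabits R0) (fun R' => bad R' /\ qtr R' (sq n))). apply step; auto. }
  assert (Hqt : forall n, qtr (sq (S n)) (sq n)).
  { intros n. change (sq (S n)) with (stepR (sq n)). unfold stepR.
    apply (epsilon_spec (inhabits R0) (fun R' => bad R' /\ qtr R' (sq n))). apply step; auto. }
  assert (Wd : forall n, rb (sq n) - ra (sq n) = (b - a) * (/ 2) ^ n /\
                         rd (sq n) - rc (sq n) = (d - c) * (/ 2) ^ n).
  { induction n.
    - simpl. split; ring.
    - destruct (Hqt n) as [_ [Q2 [_ Q4]]]. destruct IHn as [I1 I2]. simpl pow.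
      split; [rewrite Q2| rewrite Q4]; lra. }
  assert (Mo : forall n, ra (sq n) <= ra (sq (S n)) /\ rb (sq (S n)) <= rb (sq n) /\
                         rc (sq n) <= rc (sq (S n)) /\ rd (sq (S n)) <= rd (sq n)).
  { intros n. destruct (Hqt n) as [Q1 [Q2 [Q3 Q4]]]. destruct (Hb n) as [_ [H1 [H2 _]]].
    destruct Q1 as [Q1|Q1]; destruct Q3 as [Q3|Q3]; rewrite ?Q2, ?Q4; rewrite ?Q1, ?Q3; lra. }
  assert (Mo2 : forall n j : nat, ra (sq n) <= ra (sq (n + j)%nat) /\ rb (sq (n + j)%nat) <= rb (sq n) /\
                         rc (sq n) <= rc (sq (n + j)%nat) /\ rd (sq (n + j)%nat) <= rd (sq n)).
  { intros n j. induction j.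
    - rewrite Nat.add_0_r. lra.
    - rewrite Nat.add_succ_r. pose proof (Mo (n + j)%nat). lra. }
  assert (ABm : forall n m : nat, ra (sq n) <= rb (sq m) /\ rc (sq n) <= rd (sq m)).
  { intros n m. destruct (Mo2 n m) as [M1 [_ [M3 _]]]. destruct (Mo2 m n) as [_ [M2 [_ M4]]].
    rewrite Nat.add_comm in M2, M4. destruct (Hb (n + m)%nat) as [_ [H1 [H2 _]]]. lra. }
  destruct (completeness (fun y => exists n, y = ra (sq n))) as [us [Hus1 Hus2]].
  { exists (rb (sq 0%nat)). intros y [n ->]. apply ABm. }
  { exists (ra (sq 0%nat)). exists 0%nat. auto. }
  destruct (completeness (fun y => exists n, y = rc (sq n))) as [vs [Hvs1 Hvs2]].
  { exists (rd (sq 0%nat)). intros y [n ->]. apply ABm. }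
  { exists (rc (sq 0%nat)). exists 0%nat. auto. }
  assert (Ua : forall n, ra (sq n) <= us /\ us <= rb (sq n)).
  { intros n. split. apply Hus1. exists n; auto. apply Hus2. intros y [j ->]. apply ABm. }
  assert (Va : forall n, rc (sq n) <= vs /\ vs <= rd (sq n)).
  { intros n. split. apply Hvs1. exists n; auto. apply Hvs2. intros y [j ->]. apply ABm. }
  destruct (Hloc us vs) as [del [Hdel Hl]].
  { apply (Ua 0%nat). }
  { apply (Va 0%nat). }
  set (s0 := (b - a) + (d - c)).
  assert (Hs0 : 0 < s0) by (unfold s0; lra).
  destruct (pow_lt_1_zero (/ 2) ltac:(rewrite Rabs_right; lra) (del / s0)
     ltac:(apply Rdiv_lt_0_compat; lra)) as [N HN].
  specialize (HN N (le_n N)).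
  rewrite Rabs_right in HN by (apply Rle_ge, pow_le; lra).
  destruct (Hb N) as [HV [H1 [H2 HF]]].
  destruct (Wd N) as [W1 W2].
  assert (Hsz : sz (sq N) < del).
  { unfold sz. rewrite W1, W2.
    replace ((b - a) * (/ 2) ^ N + (d - c) * (/ 2) ^ N) with (s0 * (/ 2) ^ N) by (unfold s0; ring).
    apply Rlt_le_trans with (s0 * (del / s0)). apply Rmult_lt_compat_l; auto.
    right; field; lra. }
  pose proof (Hl _ _ _ _ HV (Ua N) (Va N) Hsz). unfold sz in HF. lra.
Qed.

Lemma small_zero (z : R) (K : R) : 0 < K -> (forall eps, 0 < eps -> z <= eps * K) -> z <= 0.
Proof.
  intros HK H. apply Rnot_lt_le. intro Hz.
  pose proof (H (z / (2 * K)) ltac:(apply Rdiv_lt_0_compat; lra)).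
  replace (z / (2 * K) * K) with (z / 2) in H0 by (field; lra). lra.
Qed.

Lemma goursat g g' x rho a0 : 0 < a0 -> HDer g g' x rho ->
  forall a b c d, a0 <= a -> a < b -> b <= rho -> c < d -> JJ g x a b c d = 0%C.
Proof.
  intros Ha0 HD a b c d Ha Hab Hb Hcd.
  apply Cmod_eq_0. apply Rle_antisym; [|apply Cmod_ge_0].
  set (Cst := 2 * (1 + 2 * rho) * (/ (a0 * a0) + / a0)).
  assert (HC : 0 < Cst).
  { unfold Cst. assert (0 < / (a0 * a0)) by (apply Rinv_0_lt_compat; nra).
    assert (0 < / a0) by (apply Rinv_0_lt_compat; nra). nra. }
  apply (small_zero _ (Cst * ((b - a) + (d - c)) ^ 2)).
  { apply Rmult_lt_0_compat; auto. apply pow_lt; lra. }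
  intros eps Heps. rewrite <- Rmult_assoc.
  apply (bisect (fun a b c d => Cmod (JJ g x a b c d)) (fun a b c d => a0 <= a /\ b <= rho)
     (eps * Cst) a b c d).
  - split; lra.
  - auto.
  - auto.
  - intros a1 b1 c1 d1 [H1 H2] H3 H4.
    repeat split; try lra.
    rewrite (JJ_quarter g g' x rho a0 Ha0 HD a1 b1 c1 d1 H1 ltac:(lra) H2).
    eapply Rle_trans; [apply Cmod_triangle|].
    apply Rplus_le_compat_r.
    eapply Rle_trans; [apply Cmod_triangle|].
    apply Rplus_le_compat_r.
    apply Cmod_triangle.
  - intros u0 v0 Hu Hv.
    destruct (local_est g g' x rho a0 Ha0 HD u0 v0 ltac:(lra) eps Heps) as [del [Hdel Hl]].
    exists del; split; auto.
    intros a' b' c' d' [V1 V2] [U1 U2] [W1 W2] Hs.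
    apply Hl; auto.
Qed.

Lemma PP_2PI g x u : PP g x u (2 * PI) = PP g x u 0.
Proof. unfold PP, gam, ei, em. rewrite cos_2PI, sin_2PI, cos_0, sin_0. reflexivity. Qed.

Lemma circle_eq g g' x rho a : 0 < a -> a < rho -> HDer g g' x rho ->
  RI (fun v => QQ g x rho v) 0 (2 * PI) = RI (fun v => QQ g x a v) 0 (2 * PI).
Proof.
  intros Ha Har HD.
  pose proof (goursat g g' x rho a Ha HD a rho 0 (2 * PI) (Rle_refl _) Har (Rle_refl _)
     ltac:(pose proof PI_RGT_0; lra)) as J.
  unfold JJ in J.
  assert (E : RI (fun u => PP g x u (2 * PI)) a rho = RI (fun u => PP g x u 0) a rho).
  { apply (RInt_ext (V:=C_R_CompleteNormedModule)). intros; apply PP_2PI. }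
  rewrite E in J.
  replace (RI (fun v => QQ g x rho v) 0 (2 * PI)) with
    ((RI (fun u => PP g x u 0) a rho - RI (fun u => PP g x u 0) a rho +
       (RI (fun v => QQ g x rho v) 0 (2 * PI) - RI (fun v => QQ g x a v) 0 (2 * PI)))
     + RI (fun v => QQ g x a v) 0 (2 * PI))%C by ring.
  rewrite J. ring.
Qed.

Lemma circle_approx g g' x rho : 0 < rho -> HDer g g' x rho ->
  forall eps, 0 < eps -> exists a, 0 < a < rho /\
  Cmod (RI (fun v => QQ g x a v) 0 (2 * PI) - RtoC (2 * PI) * (Ci * g' x))%C <= eps * (2 * PI).
Proof.
  intros Hr HD eps Heps.
  assert (Hd : is_derive (K:=C_AbsRing) (V:=C_NormedModule) g x (g' x)).
  { apply HD. unfold Cminus. rewrite Cplus_opp_r, Cmod_0; lra. }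
  destruct (deriv_eps _ _ _ Hd eps Heps) as [d1 [Hd1 Hr1]].
  set (a := Rmin (d1 / 2) (rho / 2)).
  assert (Ha : 0 < a) by (apply Rmin_pos; lra).
  assert (Ha1 : a < d1) by (pose proof (Rmin_l (d1/2) (rho/2)); fold a in H; lra).
  assert (Ha2 : a < rho) by (pose proof (Rmin_r (d1/2) (rho/2)); fold a in H; lra).
  exists a. split; [lra|].
  pose proof (RI_correct _ _ _ (exQ g g' x rho HD a 0 (2 * PI) Ha ltac:(lra))) as IQ.
  set (K := (Ci * g x * RtoC (/ a))%C).
  pose proof (is_RInt_Cminus _ _ _ _ _ _ (is_RInt_Cminus _ _ _ _ _ _ IQ
      (is_RInt_Cmul K _ 0 (2 * PI) _ (is_RInt_em 0 (2 * PI))))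
      (is_RInt_Cconst (Ci * g' x)%C 0 (2 * PI))) as HI.
  assert (EE0 : ((sin (2 * PI) - sin 0)%R, (cos (2 * PI) - cos 0)%R) = RtoC 0).
  { rewrite sin_2PI, cos_2PI, sin_0, cos_0. unfold RtoC. f_equal; ring. }
  rewrite EE0, Cmult_0_r, Rminus_0_r in HI.
  replace (RI (fun v => QQ g x a v) 0 (2 * PI) - RtoC (2 * PI) * (Ci * g' x))%C
    with (RI (fun v => QQ g x a v) 0 (2 * PI) - 0 - RtoC (2 * PI) * (Ci * g' x))%C by ring.
  replace (eps * (2 * PI)) with (eps * (2 * PI - 0)) by ring.
  apply (RInt_bound _ 0 (2 * PI) _ _ ltac:(pose proof PI_RGT_0; lra) HI).
  intros t Ht.
  set (r := (g (gam x a t) - g x - (gam x a t - x) * g' x)%C).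
  replace (QQ g x a t - K * em t - Ci * g' x)%C with (Ci * r * em t * RtoC (/ a))%C.
  2:{ unfold QQ, K, r, gam. rewrite em_inv, RtoC_inv by lra. field.
      split; [apply ei_neq0| apply RtoC_neq0; lra]. }
  rewrite !Cmod_mult, Cmod_Ci, Cmod_em, Cmod_R, Rabs_right by (apply Rle_ge, Rlt_le, Rinv_0_lt_compat; lra).
  assert (G : Cmod (gam x a t - x) < d1) by (rewrite Cmod_gam; lra).
  pose proof (Hr1 _ G) as H. fold r in H. rewrite Cmod_gam in H by lra.
  rewrite Rmult_1_l, Rmult_1_r.
  apply Rle_trans with (eps * a * / a).
  apply Rmult_le_compat_r; [apply Rlt_le, Rinv_0_lt_compat; lra| exact H].
  right; field; lra.
Qed.

Lemma circle g g' x rho : 0 < rho -> HDer g g' x rho ->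
  RI (fun v => QQ g x rho v) 0 (2 * PI) = (RtoC (2 * PI) * (Ci * g' x))%C.
Proof.
  intros Hr HD.
  set (Z := (RI (fun v => QQ g x rho v) 0 (2 * PI) - RtoC (2 * PI) * (Ci * g' x))%C).
  assert (HZ : Cmod Z <= 0).
  { apply (small_zero _ (2 * PI)). pose proof PI_RGT_0; lra.
    intros eps Heps. destruct (circle_approx g g' x rho Hr HD eps Heps) as [a [Ha H]].
    unfold Z. rewrite (circle_eq g g' x rho a); try lra; auto. }
  assert (Z = 0%C) by (apply Cmod_eq_0; pose proof (Cmod_ge_0 Z); lra).
  unfold Z in H. 
  replace (RI (fun v => QQ g x rho v) 0 (2 * PI)) with
    ((RI (fun v => QQ g x rho v) 0 (2 * PI) - RtoC (2 * PI) * (Ci * g' x)) + RtoC (2 * PI) * (Ci * g' x))%C by ring.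
  rewrite H. ring.
Qed.

Definition dotC (a b : C) : R := fst a * fst b + snd a * snd b.

Lemma Cmod_sq (z : C) : Cmod z ^ 2 = dotC z z.
Proof.
  unfold Cmod, dotC. rewrite pow2_sqrt. ring.
  apply Rplus_le_le_0_compat; apply pow2_ge_0.
Qed.

Lemma mvt_C (g g' : C -> C) (p h : C) (K : R) :
  (forall t, 0 <= t <= 1 -> is_derive (K:=C_AbsRing) (V:=C_NormedModule) g (p + RtoC t * h)%C (g' (p + RtoC t * h)%C)
     /\ Cmod (g' (p + RtoC t * h)%C) <= K) ->
  Cmod (g (p + h)%C - g p) <= K * Cmod h.
Proof.
  intros Hg.
  set (D := (g (p + h)%C - g p)%C).
  set (phi := fun t => dotC D (g (p + RtoC t * h)%C)).
  set (dphi := fun t => dotC D (h * g' (p + RtoC t * h)%C)%C).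
  assert (Hder : forall t, 0 <= t <= 1 -> is_derive phi t (dphi t)).
  { intros t Ht. apply is_derive_Reals. intros eps Heps.
    destruct (Hg t Ht) as [Hd _].
    set (z := (p + RtoC t * h)%C) in *.
    set (e1 := eps / (2 * (Cmod D * Cmod h + 1))).
    assert (He1 : 0 < e1).
    { unfold e1. apply Rdiv_lt_0_compat; auto. pose proof (Cmod_ge_0 D); pose proof (Cmod_ge_0 h); nra. }
    destruct (deriv_eps _ _ _ Hd e1 He1) as [d1 [Hd1 Hr]].
    assert (Hdel : 0 < d1 / (Cmod h + 1)) by (apply Rdiv_lt_0_compat; pose proof (Cmod_ge_0 h); lra).
    exists (mkposreal _ Hdel). intros s Hs0 Hs. simpl in Hs.
    set (w := (p + RtoC (t + s) * h)%C).
    assert (Ew : (w - z)%C = (RtoC s * h)%C) by (unfold w, z; rewrite RtoC_plus; ring).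
    assert (Cw : Cmod (w - z) = Rabs s * Cmod h) by (rewrite Ew, Cmod_mult, Cmod_R; auto).
    assert (Cw2 : Cmod (w - z) < d1).
    { rewrite Cw. pose proof (Cmod_ge_0 h). pose proof (Rabs_pos s).
      apply Rle_lt_trans with (Rabs s * (Cmod h + 1)). nra.
      apply Rlt_le_trans with (d1 / (Cmod h + 1) * (Cmod h + 1)).
      apply Rmult_lt_compat_r; lra. right; field; lra. }
    pose proof (Hr w Cw2) as HX.
    set (X := (g w - g z - (w - z) * g' z)%C) in *.
    assert (Eg : g w = (g z + RtoC s * (h * g' z) + X)%C) by (unfold X; rewrite Ew; ring).
    assert (Ephi : phi (t + s) - phi t = s * dphi t + dotC D X).
    { unfold phi, dphi. fold w. fold z. rewrite Eg. unfold dotC.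
      destruct (g z), X, (h * g' z)%C, D. simpl. ring. }
    rewrite Ephi.
    replace ((s * dphi t + dotC D X) / s - dphi t) with (dotC D X / s) by (field; auto).
    unfold Rdiv. rewrite Rabs_mult, Rabs_inv.
    pose proof (dot_le D X) as HdX. fold (dotC D X) in HdX.
    assert (0 < Rabs s) by (apply Rabs_pos_lt; auto).
    apply Rle_lt_trans with (Cmod D * (e1 * (Rabs s * Cmod h)) * / Rabs s).
    { apply Rmult_le_compat_r. apply Rlt_le, Rinv_0_lt_compat; auto.
      eapply Rle_trans; [exact HdX|]. apply Rmult_le_compat_l. apply Cmod_ge_0.
      rewrite <- Cw. exact HX. }
    replace (Cmod D * (e1 * (Rabs s * Cmod h)) * / Rabs s) with (e1 * (Cmod D * Cmod h)) by (field; lra).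
    unfold e1. pose proof (Cmod_ge_0 D); pose proof (Cmod_ge_0 h).
    assert (0 <= Cmod D * Cmod h) by nra.
    apply Rle_lt_trans with (eps / (2 * (Cmod D * Cmod h + 1)) * (Cmod D * Cmod h + 1)).
    apply Rmult_le_compat_l; [apply Rlt_le; auto| lra].
    replace (eps / (2 * (Cmod D * Cmod h + 1)) * (Cmod D * Cmod h + 1)) with (eps / 2) by (field; lra).
    lra. }
  destruct (MVT_gen phi 0 1 dphi) as [c [Hc Hmvt]].
  { rewrite Rmin_left, Rmax_right by lra. intros; apply Hder; lra. }
  { rewrite Rmin_left, Rmax_right by lra. intros y Hy. apply ex_derive_cpt.
    exists (dphi y). apply Hder; auto. }
  rewrite Rmin_left, Rmax_right in Hc by lra.
  assert (E1 : phi 1 - phi 0 = Cmod D ^ 2).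
  { rewrite Cmod_sq. unfold phi. rewrite Cmult_1_l, Cmult_0_l, Cplus_0_r.
    unfold D, dotC. destruct (g (p + h)%C), (g p). simpl. ring. }
  rewrite E1, Rminus_0_r, Rmult_1_r in Hmvt.
  destruct (Hg c Hc) as [_ HK].
  assert (Hdp : dphi c <= Cmod D * (Cmod h * K)).
  { unfold dphi. eapply Rle_trans; [apply Rle_abs|]. eapply Rle_trans; [apply dot_le|].
    apply Rmult_le_compat_l; [apply Cmod_ge_0|]. rewrite Cmod_mult.
    apply Rmult_le_compat_l; [apply Cmod_ge_0|auto]. }
  fold D.
  destruct (Req_dec (Cmod D) 0) as [Z|Z].
  { rewrite Z. destruct (Hg 0 ltac:(lra)) as [_ HK0]. pose proof (Cmod_ge_0 (g' (p + RtoC 0 * h)%C)).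
    pose proof (Cmod_ge_0 h). nra. }
  pose proof (Cmod_ge_0 D).
  assert (0 < Cmod D) by lra.
  apply Rmult_le_reg_l with (Cmod D); auto. nra.
Qed.

Lemma lip (g g' : C -> C) (x1 x2 : C) (rho K : R) : 0 < rho -> Cmod (x1 - x2) <= rho ->
  (forall w, Cmod (w - x2) <= 2 * rho ->
     is_derive (K:=C_AbsRing) (V:=C_NormedModule) g w (g' w) /\ Cmod (g' w) <= K) ->
  Cmod (g' x1 - g' x2) <= K * Cmod (x1 - x2) / rho.
Proof.
  intros Hr Hx H.
  assert (HD2 : HDer g g' x2 rho) by (intros w Hw; apply H; lra).
  assert (HD1 : HDer g g' x1 rho).
  { intros w Hw; apply H.
    replace (w - x2)%C with ((w - x1) + (x1 - x2))%C by ring.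
    eapply Rle_trans; [apply Cmod_triangle|]. lra. }
  pose proof (circle g g' x1 rho Hr HD1) as C1.
  pose proof (circle g g' x2 rho Hr HD2) as C2.
  pose proof (is_RInt_Cminus _ _ _ _ _ _
     (RI_correct _ _ _ (exQ g g' x1 rho HD1 rho 0 (2 * PI) Hr (Rle_refl _)))
     (RI_correct _ _ _ (exQ g g' x2 rho HD2 rho 0 (2 * PI) Hr (Rle_refl _)))) as HI.
  rewrite C1, C2 in HI.
  pose proof PI_RGT_0.
  assert (B := RInt_bound _ 0 (2 * PI) _ (K * Cmod (x1 - x2) / rho) ltac:(lra) HI).
  assert (B' : Cmod (RtoC (2 * PI) * (Ci * g' x1) - RtoC (2 * PI) * (Ci * g' x2))%C <=
               K * Cmod (x1 - x2) / rho * (2 * PI - 0)).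
  { apply B. intros t Ht.
    replace (QQ g x1 rho t - QQ g x2 rho t)%C with
      (Ci * (g (gam x2 rho t + (x1 - x2))%C - g (gam x2 rho t)) * em t * RtoC (/ rho))%C.
    2:{ unfold QQ. replace (gam x2 rho t + (x1 - x2))%C with (gam x1 rho t) by (unfold gam; ring). ring. }
    rewrite !Cmod_mult, Cmod_Ci, Cmod_em, Cmod_R, Rabs_right by (apply Rle_ge, Rlt_le, Rinv_0_lt_compat; lra).
    rewrite Rmult_1_l, Rmult_1_r. unfold Rdiv. apply Rmult_le_compat_r; [apply Rlt_le, Rinv_0_lt_compat; lra|].
    apply (mvt_C g g'). intros s Hs. apply H.
    replace (gam x2 rho t + RtoC s * (x1 - x2) - x2)%C with (RtoC rho * ei t + RtoC s * (x1 - x2))%C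
      by (unfold gam; ring).
    eapply Rle_trans; [apply Cmod_triangle|]. rewrite !Cmod_mult, Cmod_ei, !Cmod_R.
    rewrite (Rabs_right rho), (Rabs_right s) by lra. nra. }
  replace (RtoC (2 * PI) * (Ci * g' x1) - RtoC (2 * PI) * (Ci * g' x2))%C with
    (RtoC (2 * PI) * Ci * (g' x1 - g' x2))%C in B' by ring.
  rewrite !Cmod_mult, Cmod_Ci, Cmod_R, Rabs_right in B' by lra.
  rewrite Rminus_0_r in B'. nra.
Qed.


Lemma polar_ei r t : polar r t = (RtoC r * ei t)%C.
Proof. unfold polar, ei, RtoC, Cmult; simpl. f_equal; ring. Qed.

Lemma Cmod_polar r t : 0 <= r -> Cmod (polar r t) = r.
Proof. intros H. rewrite polar_ei, Cmod_mult, Cmod_ei, Cmod_R, Rabs_right; lra. Qed.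

Lemma polar_exists (z : C) : z <> 0%C -> exists t, 0 <= t < 2 * PI /\ z = polar (Cmod z) t.
Proof.
  intros Hz. set (r := Cmod z). assert (Hr : 0 < r) by (apply Cmod_gt_0; auto).
  assert (Hsq : r ^ 2 = fst z ^ 2 + snd z ^ 2).
  { unfold r, Cmod. rewrite pow2_sqrt; auto. apply Rplus_le_le_0_compat; apply pow2_ge_0. }
  set (cx := fst z / r).
  assert (Hcx : -1 <= cx <= 1).
  { pose proof (Cmod_fst z). fold r in H.
    assert (-r <= fst z <= r) by (pose proof (Rle_abs (fst z)); pose proof (Rabs_maj2 (fst z)); lra).
    unfold cx; split; apply (Rmult_le_reg_r r); auto; unfold Rdiv; rewrite Rmult_assoc, Rinv_l; lra. }
  assert (Hs : sqrt (1 - cx ^ 2) = Rabs (snd z) / r).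
  { replace (1 - cx ^ 2) with ((snd z / r) ^ 2).
    replace ((snd z / r) ^ 2) with (Rsqr (snd z / r)) by (unfold Rsqr; ring).
    rewrite sqrt_Rsqr_abs. unfold Rdiv. rewrite Rabs_mult, Rabs_inv, (Rabs_right r); lra.
    unfold cx.
    replace ((snd z / r) ^ 2) with (snd z ^ 2 / r ^ 2) by (field; lra).
    replace ((fst z / r) ^ 2) with (fst z ^ 2 / r ^ 2) by (field; lra).
    replace (snd z ^ 2) with (r^2 - fst z^2) by lra.
    field. lra. }
  pose proof PI_RGT_0.
  destruct (Rle_lt_dec 0 (snd z)) as [Hy|Hy].
  - exists (acos cx). pose proof (acos_bound cx). split; [lra|].
    unfold polar. fold r. rewrite cos_acos, sin_acos by lra.
    replace (cx ^ 2) with (cx²) in Hs by (unfold Rsqr; ring). rewrite Hs.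
    rewrite Rabs_right by lra. destruct z as [z1 z2]. unfold cx; simpl. f_equal; field; lra.
  - exists (2 * PI - acos cx). pose proof (acos_bound cx).
    assert (acos cx <> 0).
    { intro E. assert (E1 : cx = 1) by (rewrite <- (cos_acos cx), E, cos_0 by lra; auto).
      assert (fst z = r) by (unfold cx, Rdiv in E1; apply (Rmult_eq_reg_r (/ r)); [rewrite E1; field| apply Rinv_neq_0_compat]; lra).
      assert (snd z ^ 2 = 0) by nra. assert (snd z = 0) by nra.
      lra. }
    assert (0 < acos cx) by lra.
    split; [lra|].
    unfold polar. fold r. rewrite cos_minus, sin_minus, cos_2PI, sin_2PI, cos_acos, sin_acos by lra.
    replace (cx ^ 2) with (cx²) in Hs by (unfold Rsqr; ring). rewrite Hs.
    rewrite Rabs_left by lra. destruct z as [z1 z2]. unfold cx; simpl. f_equal; field; lra.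
Qed.

Theorem lemma5p4 (g g' : C -> C) :
  bloch g g' -> ~ little_bloch g g' ->
  exists delta : R, 0 < delta < PI / 8 /\
  exists (r t : nat -> R),
    (forall n, 0 < r n < 1) /\
    (forall n, r n < r (S n)) /\
    is_lim_seq r 1 /\
    (forall n, 0 <= t n < 2 * PI) /\
    (forall (n : nat) (s : R),
       - (delta * (1 - r n)) <= s <= delta * (1 - r n) ->
       (1 - r n) * Cmod (g' (polar (r n) (t n + s))) >= delta).
Proof.
  intros [HD [M HM]] Hn.
  assert (HM0 : 0 <= M).
  { assert (H0 : in_disk 0%C) by (unfold in_disk; rewrite Cmod_0; lra).
    pose proof (HM _ H0). rewrite Cmod_0 in H. pose proof (Cmod_ge_0 (g' 0%C)). nra. }
  destruct (classic (exists eps, 0 < eps /\ forall rho, rho < 1 -> exists z, rho < Cmod z /\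
     Cmod z < 1 /\ eps <= (1 - Cmod z ^ 2) * Cmod (g' z))) as [[eps [Heps HE]]|NE].
  2:{ exfalso. apply Hn. split; auto. intros eps He. apply NNPP. intro Hno. apply NE.
      exists eps. split; auto. intros rho Hr. apply NNPP. intro Hz. apply Hno.
      exists rho. split; auto. intros z H1 H2. apply Rnot_le_lt. intro H3. apply Hz.
      exists z. auto. }
  set (P := fun rho z => rho < 1 -> rho < Cmod z /\ Cmod z < 1 /\ eps <= (1 - Cmod z ^ 2) * Cmod (g' z)).
  set (Zc := fun rho => epsilon (A:=C) (inhabits (RtoC 0)) (P rho)).
  assert (HZ : forall rho, rho < 1 -> rho < Cmod (Zc rho) /\ Cmod (Zc rho) < 1 /\
              eps <= (1 - Cmod (Zc rho) ^ 2) * Cmod (g' (Zc rho))).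
  { intros rho Hr. apply (epsilon_spec (A:=C) (inhabits (RtoC 0)) (P rho)); auto.
    destruct (HE rho Hr) as [z Hz]. exists z. intros _. auto. }
  set (rh := fix rh (n : nat) : R := match n with O => 1/2
             | S m => Rmax (Cmod (Zc (rh m))) (1 - / INR (S (S m))) end).
  assert (HI2 : forall m : nat, 1/2 <= 1 - / INR (S (S m)) < 1).
  { intros m. rewrite !S_INR. pose proof (pos_INR m).
    assert (0 < / (INR m + 1 + 1)) by (apply Rinv_0_lt_compat; lra).
    assert (/ (INR m + 1 + 1) <= / 2) by (apply Rinv_le_contravar; lra). lra. }
  assert (Hrh : forall n, 1/2 <= rh n < 1).
  { induction n.
    - simpl. lra.
    - change (rh (S n)) with (Rmax (Cmod (Zc (rh n))) (1 - / INR (S (S n)))).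
      destruct (HZ (rh n) (proj2 IHn)) as [Z1 [Z2 _]]. pose proof (HI2 n).
      split. eapply Rle_trans; [|apply Rmax_r]. lra.
      apply Rmax_lub_lt; lra. }
  set (r := fun n => Cmod (Zc (rh n))).
  assert (HZn : forall n, rh n < r n /\ r n < 1 /\ eps <= (1 - r n ^ 2) * Cmod (g' (Zc (rh n)))).
  { intros n. apply HZ. apply Hrh. }
  assert (Hnz : forall n, Zc (rh n) <> 0%C).
  { intros n E. destruct (HZn n) as [H1 _]. unfold r in H1. rewrite E, Cmod_0 in H1.
    pose proof (Hrh n). lra. }
  set (tt := fun n => epsilon (inhabits 0) (fun t => 0 <= t < 2 * PI /\ Zc (rh n) = polar (r n) t)).
  assert (Htt : forall n, 0 <= tt n < 2 * PI /\ Zc (rh n) = polar (r n) (tt n)).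
  { intros n. apply (epsilon_spec (inhabits 0) (fun t => 0 <= t < 2 * PI /\ Zc (rh n) = polar (r n) t)).
    apply polar_exists. auto. }
  pose proof PI_RGT_0 as HPI.
  set (delta := Rmin (Rmin (1/8) (PI/16)) (eps / (2 * (1 + 16 * M)))).
  assert (Hd1 : delta <= 1/8) by (unfold delta; eapply Rle_trans; [apply Rmin_l| apply Rmin_l]).
  assert (Hd2 : delta <= PI/16) by (unfold delta; eapply Rle_trans; [apply Rmin_l| apply Rmin_r]).
  assert (Hd3 : delta <= eps / (2 * (1 + 16 * M))) by (unfold delta; apply Rmin_r).
  assert (Hd0 : 0 < delta).
  { unfold delta. apply Rmin_pos; [apply Rmin_pos; lra|]. apply Rdiv_lt_0_compat; lra. }
  exists delta. split; [lra|].
  exists r, tt.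
  split; [|split; [|split; [|split]]].
  - intros n. destruct (HZn n) as [H1 [H2 _]]. pose proof (Hrh n). lra.
  - intros n. destruct (HZn (S n)) as [H1 _].
    change (rh (S n)) with (Rmax (Cmod (Zc (rh n))) (1 - / INR (S (S n)))) in H1.
    pose proof (Rmax_l (Cmod (Zc (rh n))) (1 - / INR (S (S n)))). unfold r at 1. lra.
  - apply is_lim_seq_le_le with (fun n => 1 - / INR (S n)) (fun _ => 1).
    + intros n. destruct (HZn n) as [H1 [H2 _]]. split; [|lra].
      destruct n.
      * change (INR 1) with 1. rewrite Rinv_1. pose proof (Hrh 0%nat). lra.
      * change (rh (S n)) with (Rmax (Cmod (Zc (rh n))) (1 - / INR (S (S n)))) in H1.
        pose proof (Rmax_r (Cmod (Zc (rh n))) (1 - / INR (S (S n)))). lra.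
    + replace (Finite 1) with (Finite (1 - 0)) by (f_equal; ring).
      apply is_lim_seq_minus'. apply is_lim_seq_const.
      assert (L : is_lim_seq (fun n => / INR n) 0).
      { replace (Finite 0) with (Rbar_inv p_infty) by reflexivity.
        apply is_lim_seq_inv. apply is_lim_seq_INR. discriminate. }
      apply (is_lim_seq_incr_1 (fun n => / INR n)). exact L.
    + apply is_lim_seq_const.
  - intros n. apply Htt.
  - intros n s Hs.
    destruct (HZn n) as [Hr1 [Hr2 Heps']]. pose proof (Hrh n) as Hrh'.
    destruct (Htt n) as [_ Hzn].
    set (zn := Zc (rh n)) in *. set (d := 1 - r n) in *.
    set (z := polar (r n) (tt n + s)).
    assert (Hd : 0 < d <= 1/2) by (unfold d; lra).
    assert (Hr0 : 0 <= r n) by lra.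
    assert (Hzz : Cmod (z - zn) <= 2 * delta * d).
    { unfold z. rewrite Hzn, !polar_ei.
      replace (RtoC (r n) * ei (tt n + s) - RtoC (r n) * ei (tt n))%C with
        (RtoC (r n) * (ei (tt n + s) - ei (tt n)))%C by ring.
      rewrite Cmod_mult, Cmod_R, Rabs_right by lra.
      pose proof (ei_lip (tt n + s) (tt n)).
      replace (tt n + s - tt n) with s in H by ring.
      assert (Rabs s <= delta * d) by (apply Rabs_le; lra).
      pose proof (Cmod_ge_0 (ei (tt n + s) - ei (tt n))). nra. }
    set (rho := d / 4). set (K := 2 * M / d).
    assert (Hreg : forall w, Cmod (w - zn) <= 2 * rho ->
       is_derive (K:=C_AbsRing) (V:=C_NormedModule) g w (g' w) /\ Cmod (g' w) <= K).
    { intros w Hw.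
      assert (Hwn : Cmod w <= 1 - d / 2).
      { replace w with ((w - zn) + zn)%C by ring.
        eapply Rle_trans; [apply Cmod_triangle|]. 
        assert (Cmod zn = r n) by reflexivity. unfold rho in Hw. unfold d in *. lra. }
      pose proof (Cmod_ge_0 w).
      assert (Hin : in_disk w) by (unfold in_disk; lra).
      split; [apply HD; auto|].
      pose proof (HM w Hin) as HB.
      assert (1 - Cmod w ^ 2 >= d / 2) by nra.
      pose proof (Cmod_ge_0 (g' w)).
      unfold K. apply Rmult_le_reg_l with (d / 2); [lra|].
      replace (d / 2 * (2 * M / d)) with M by (field; lra). nra. }
    assert (Hlip : Cmod (g' z - g' zn) <= K * Cmod (z - zn) / rho).
    { apply (lip g g'); auto. unfold rho; lra. unfold rho. nra. }
    assert (Hlip2 : d * Cmod (g' z - g' zn) <= 16 * M * delta).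
    { apply Rle_trans with (d * (K * (2 * delta * d) / rho)).
      apply Rmult_le_compat_l; [lra|]. eapply Rle_trans; [exact Hlip|]. unfold Rdiv. apply Rmult_le_compat_r.
      apply Rlt_le, Rinv_0_lt_compat; unfold rho; lra.
      apply Rmult_le_compat_l; auto. unfold K. apply Rdiv_le_0_compat; lra.
      right. unfold K, rho. field. lra. }
    assert (Hgz : eps <= 2 * d * Cmod (g' zn)).
    { eapply Rle_trans; [exact Heps'|]. apply Rmult_le_compat_r; [apply Cmod_ge_0|].
      unfold d. nra. }
    assert (Htri : Cmod (g' zn) <= Cmod (g' z) + Cmod (g' z - g' zn)).
    { replace (g' zn) with (g' z - (g' z - g' zn))%C at 1 by ring.
      unfold Cminus at 1. eapply Rle_trans; [apply Cmod_triangle|]. rewrite Cmod_opp. lra. }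
    assert (Hdl : delta * (1 + 16 * M) <= eps / 2).
    { apply Rle_trans with (eps / (2 * (1 + 16 * M)) * (1 + 16 * M)).
      apply Rmult_le_compat_r; lra. right; field; lra. }
    apply Rle_ge. fold z. fold d. nra.
Qed.
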